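(* Let $K\le N$ and for $\mathbf{X}\in\mathbb{R}^{N\times K}$ define $$\ell_{\mathrm{om}}(\mathbf{X})=K\|\mathbf{X}^{\mathrm T}\mathbf{X}\|_{\mathrm F}^2-\|\mathbf{X}\|_{\mathrm F}^4.$$ If $\mathbf{X}=\mathbf{U}\mathbf{S}\mathbf{V}^{\mathrm T}$ is a singular value decomposition of $\mathbf{X}$ with singular values $S_{1,1},\dots,S_{K,K}$, then $$\ell_{\mathrm{om}}(\mathbf{X})=K\sum_{k=1}^K S_{k,k}^4-\Big(\sum_{k=1}^K S_{k,k}^2\Big)^2.$$ Moreover, $\ell_{\mathrm{om}}(\mathbf{X})\ge0$ for all $\mathbf{X}$, and $\ell_{\mathrm{om}}(\mathbf{X})=0$ if and only if $\mathbf{X}^{\mathrm T}\mathbf{X}=\alpha\mathbf{I}_K$ for some $\alpha\ge0$ (i.e., the columns of $\mathbf{X}$ are pairwise orthogonal and of equal length). Furthermore, $\ell_{\mathrm{om}}$ has no spurious stationary points: $\nabla_{\mathbf{X}}\ell_{\mathrm{om}}(\mathbf{X})=\mathbf{0}$ holds only if $\mathbf{X}^{\mathrm T}\mathbf{X}=\alpha\mathbf{I}_K$ for some $\alpha\ge0$.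
   Context: $\|\cdot\|_{\mathrm F}$ denotes the Frobenius norm and $\mathbf{I}_K$ the $K\times K$ identity matrix. A spurious stationary point of a differentiable function whose zero set is $\mathcal{X}$ is a point outside $\mathcal{X}$ where the gradient vanishes. *)

(* Defs.v *)
From HB Require Import structures.
From mathcomp Require Import all_boot all_order all_algebra.
From mathcomp Require Import all_classical all_reals all_analysis.
Set Implicit Arguments. Unset Strict Implicit. Unset Printing Implicit Defensive.
Import Order.TTheory GRing.Theory Num.Theory.
Import numFieldNormedType.Exports.
Local Open Scope ring_scope.

Definition frob (R : realType) (m n : nat) (A : 'M[R]_(m, n)) : R :=
  Num.sqrt (\sum_(i < m) \sum_(j < n) A i j ^+ 2).

Definition l_om (R : realType) (N K : nat) (X : 'M[R]_(N, K)) : R :=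
  K%:R * frob (X^T *m X) ^+ 2 - frob X ^+ 4.

Definition is_svd (R : realType) (N K : nat) (X : 'M[R]_(N, K))
  (U : 'M[R]_N) (S : 'M[R]_(N, K)) (V : 'M[R]_K) : Prop :=
  [/\ U^T *m U = 1%:M, V^T *m V = 1%:M,
      (forall (i : 'I_N) (j : 'I_K), nat_of_ord i <> nat_of_ord j -> S i j = 0),
      (forall (i : 'I_N) (j : 'I_K), nat_of_ord i = nat_of_ord j -> 0 <= S i j)
    & X = U *m S *m V^T].

Definition grad_zero (R : realType) (N K : nat) (f : 'M[R]_(N, K) -> R)
  (X : 'M[R]_(N, K)) : Prop :=
  forall (i : 'I_N) (j : 'I_K),
    is_derive (0 : R) (1 : R) (fun t : R => f (X + t *: delta_mx i j)) 0.

(* Main.v *)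
Require Import Defs.
From HB Require Import structures.
From mathcomp Require Import all_boot all_order all_algebra.
From mathcomp Require Import all_classical all_reals all_analysis.
From mathcomp Require Import ring lra.
Import Order.TTheory GRing.Theory Num.Theory.
Import numFieldNormedType.Exports.
Local Open Scope ring_scope.


Section D.
Context {R : realType}.
Implicit Types (f g : R -> R) (x v df dg : R).

Lemma dM f g x v df dg : is_derive x v f df -> is_derive x v g dg ->
  is_derive x v (fun t => f t * g t) (f x * dg + g x * df).
Proof. move=> hf hg; have := is_deriveM hf hg. by rewrite /GRing.scale /=. Qed.

Lemma dB f g x v df dg : is_derive x v f df -> is_derive x v g dg ->
  is_derive x v (fun t => f t - g t) (df - dg).
Proof. move=> hf hg; exact: is_deriveB hf hg. Qed.

Lemma dC x v (c : R) : is_derive x v (fun _ => c) 0.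
Proof. exact: is_derive_cst. Qed.

Lemma dS n (h : 'I_n -> R -> R) x v (dh : 'I_n -> R) :
  (forall i, is_derive x v (h i) (dh i)) ->
  is_derive x v (fun t => \sum_(i < n) h i t) (\sum_(i < n) dh i).
Proof.
move=> H; have := is_derive_sum H.
suff -> : (\sum_(i < n) h i) = (fun t => \sum_(i < n) h i t) by [].
apply/funext => t; by rewrite fct_sumE.
Qed.

Lemma dL x (a b : R) : is_derive x 1 (fun t => a + t * b) b.
Proof.
have H := is_deriveD (is_derive_cst a x 1) (is_deriveZ b (is_derive_id x 1)).
have -> : (fun t => a + t * b) = (cst a + b \*: id).
  by apply/funext => t /=; rewrite mulrC.
apply: is_derive_eq H _; by rewrite add0r scaler1.
Qed.
End D.
Arguments dM {R f g x v df dg}.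
Arguments dB {R f g x v df dg}.
Arguments dS {R n h x v dh}.
Arguments dC {R}.

Section Alg.
Variables (R : realType) (N K : nat).

Definition G (f : 'I_N -> 'I_K -> R) a b := \sum_(p < N) f p a * f p b.
Definition Lf (f : 'I_N -> 'I_K -> R) :=
  K%:R * (\sum_(a < K) \sum_(b < K) G f a b ^+ 2) - (\sum_(a < K) G f a a) ^+ 2.

Lemma frob2 m n (A : 'M[R]_(m, n)) : frob A ^+ 2 = \sum_i \sum_j A i j ^+ 2.
Proof.
rewrite /frob sqr_sqrtr //; apply: sumr_ge0 => i _; apply: sumr_ge0 => j _.
exact: sqr_ge0.
Qed.

Lemma lom_eq (X : 'M[R]_(N, K)) : l_om X = Lf (fun p q => X p q).
Proof.
rewrite /l_om /Lf frob2 -[4%N]/(2 * 2)%N exprM frob2.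
congr (_ * _ - _ ^+ 2).
  apply: eq_bigr => a _; apply: eq_bigr => b _; rewrite !mxE /G.
  by congr (_ ^+ 2); apply: eq_bigr => p _; rewrite !mxE.
rewrite exchange_big /=; apply: eq_bigr => a _; rewrite /G.
by apply: eq_bigr => p _; rewrite expr2.
Qed.

Lemma G_sym f a b : G f a b = G f b a.
Proof. by rewrite /G; apply: eq_bigr => p _; rewrite mulrC. Qed.

Lemma G_ge0 f a : 0 <= G f a a.
Proof. by rewrite /G; apply: sumr_ge0 => p _; rewrite -expr2 sqr_ge0. Qed.

Lemma CS (x : 'I_K -> R) :
  \sum_(a < K) \sum_(b < K) (x a - x b) ^+ 2 =
  2%:R * (K%:R * \sum_(a < K) x a ^+ 2 - (\sum_(a < K) x a) ^+ 2).
Proof.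
transitivity (\sum_(a < K) \sum_(b < K) (x a ^+ 2 + x b ^+ 2 - 2%:R * (x a * x b))).
  by apply: eq_bigr => a _; apply: eq_bigr => b _; rewrite sqrrB mulr2n mulr_natl addrAC.
rewrite (eq_bigr (fun a => K%:R * x a ^+ 2 + \sum_(b < K) x b ^+ 2
      - 2%:R * (x a * \sum_(b < K) x b))); last first.
  move=> a _; rewrite !sumrB big_split /= sumr_const card_ord -!mulr_sumr.
  by rewrite -mulr_natl; ring.
rewrite !sumrB big_split /= sumr_const card_ord -!mulr_sumr -!mulr_suml.
by rewrite -mulr_natl -expr2; ring.
Qed.

Lemma Lf_split f :
  Lf f = K%:R * (\sum_(a < K) \sum_(b < K | b != a) G f a b ^+ 2)
       + (K%:R * \sum_(a < K) G f a a ^+ 2 - (\sum_(a < K) G f a a) ^+ 2).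
Proof.
rewrite /Lf.
have -> : \sum_(a < K) \sum_(b < K) G f a b ^+ 2 =
   \sum_(a < K) \sum_(b < K | b != a) G f a b ^+ 2 + \sum_(a < K) G f a a ^+ 2.
  by rewrite -big_split /=; apply: eq_bigr => a _; rewrite (bigD1 a) //= addrC.
by rewrite mulrDr addrA.
Qed.

Lemma Lf_ge0 f : 0 <= Lf f.
Proof.
rewrite Lf_split; apply: addr_ge0.
  apply: mulr_ge0 => //; apply: sumr_ge0 => a _; apply: sumr_ge0 => b _; exact: sqr_ge0.
have := CS (fun a => G f a a).
have H : 0 <= \sum_(a < K) \sum_(b < K) (G f a a - G f b b) ^+ 2.
  apply: sumr_ge0 => a _; apply: sumr_ge0 => b _; exact: sqr_ge0.
move=> E; rewrite E in H; rewrite pmulr_rge0 // in H.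
Qed.


Lemma CS_ge0 (x : 'I_K -> R) :
  0 <= K%:R * \sum_(a < K) x a ^+ 2 - (\sum_(a < K) x a) ^+ 2.
Proof.
have := CS x.
have H : 0 <= \sum_(a < K) \sum_(b < K) (x a - x b) ^+ 2.
  apply: sumr_ge0 => a _; apply: sumr_ge0 => b _; exact: sqr_ge0.
move=> E; rewrite E in H; by rewrite pmulr_rge0 // in H.
Qed.

Lemma Lf_eq0 f : Lf f = 0 ->
  exists alpha, 0 <= alpha /\ forall a b, G f a b = alpha *+ (a == b).
Proof.
rewrite Lf_split => /eqP.
set off := \sum_(a < K) _.
have off0 : 0 <= off.
  apply: sumr_ge0 => a _; apply: sumr_ge0 => b _; exact: sqr_ge0.
rewrite paddr_eq0 ?CS_ge0 ?mulr_ge0 // => /andP[/eqP H1 /eqP H2].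
exists ((\sum_(a < K) G f a a) / K%:R); split.
  by apply: divr_ge0 => //; apply: sumr_ge0 => a _; exact: G_ge0.
have eqd : forall a b, G f a a = G f b b.
  have H : \sum_(a < K) \sum_(b < K) (G f a a - G f b b) ^+ 2 = 0.
    by rewrite (CS (fun a => G f a a)) H2 mulr0.
  move=> a b; apply/eqP; rewrite -subr_eq0 -sqrf_eq0; apply/eqP.
  have := psumr_eq0P (fun i _ => sumr_ge0 _ (fun j _ => sqr_ge0 _)) H => /(_ a isT).
  by move/psumr_eq0P => /(_ (fun j _ => sqr_ge0 _) b isT).
move=> a b.
have Kn0 : K%:R != 0 :> R by rewrite pnatr_eq0 -lt0n (leq_ltn_trans _ (ltn_ord a)).
have -> : \sum_(a0 < K) G f a0 a0 = K%:R * G f a a.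
  by rewrite (eq_bigr (fun _ => G f a a)) ?sumr_const ?card_ord ?mulr_natl // => c _; rewrite (eqd c a).
rewrite mulrC mulKf //.
case: eqP => [->|/eqP ab]; first by rewrite mulr1n.
move: H1 => /eqP; rewrite mulf_eq0 (negPf Kn0) /= => /eqP H1.
have := psumr_eq0P _ H1 => /(_ (fun i _ => sumr_ge0 _ (fun j _ => sqr_ge0 _))) /(_ a isT).
move/psumr_eq0P => /(_ (fun j _ => sqr_ge0 _)) /(_ b).
rewrite eq_sym ab => /(_ isT) /eqP; rewrite sqrf_eq0 mulr0n => /eqP //.
Qed.

Lemma Lf_alpha f alpha : (forall a b, G f a b = alpha *+ (a == b)) -> Lf f = 0.
Proof.
move=> H; rewrite /Lf.
rewrite (eq_bigr (fun _ => alpha ^+ 2)); last first.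
  move=> a _; rewrite (bigD1 a) //= H eqxx mulr1n big1 ?addr0 // => b ba.
  by rewrite H eq_sym (negPf ba) mulr0n expr0n.
rewrite [X in _ - X ^+ 2](eq_bigr (fun _ => alpha)); last by move=> a _; rewrite H eqxx mulr1n.
by rewrite !sumr_const card_ord -[alpha ^+ 2 *+ K]mulr_natl -[alpha *+ K]mulr_natl; ring.
Qed.

End Alg.
Arguments G {R N K}.
Arguments Lf {R N K}.

Section SVD.
Variables (R : realType) (N K : nat) (hKN : (K <= N)%N).

Lemma sumsq_tr m n (A : 'M[R]_(m, n)) : \sum_i \sum_j A i j ^+ 2 = \tr (A *m A^T).
Proof.
rewrite /mxtrace; apply: eq_bigr => i _; rewrite mxE; apply: eq_bigr => j _.
by rewrite mxE expr2.
Qed.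

Lemma svd_lom (X : 'M[R]_(N, K)) U S V : is_svd X U S V ->
     l_om X = K%:R * (\sum_(k < K) S (widen_ord hKN k) k ^+ 4)
              - (\sum_(k < K) S (widen_ord hKN k) k ^+ 2) ^+ 2.
Proof.
case=> hU hV Soff Sdiag ->.
set D := S^T *m S.
have hA : (U *m S *m V^T)^T *m (U *m S *m V^T) = V *m D *m V^T.
  rewrite !trmx_mul trmxK /D !mulmxA; congr (_ *m _).
  by rewrite -[V *m S^T *m U^T *m U](mulmxA) hU mulmx1.
rewrite /l_om -[4%N]/(2 * 2)%N exprM !frob2 !sumsq_tr hA.
rewrite [\tr (U *m S *m V^T *m _)]mxtrace_mulC hA.
have trV : forall M : 'M[R]_K, \tr (V *m M *m V^T) = \tr M.
  by move=> M; rewrite mxtrace_mulC mulmxA hV mul1mx.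
have trDD : forall M : 'M[R]_K, M^T = M ->
    \tr (V *m M *m V^T *m (V *m M *m V^T)^T) = \tr (M *m M).
  move=> M MT.
  have -> : (V *m M *m V^T)^T = V *m M *m V^T by rewrite !trmx_mul trmxK MT mulmxA.
  rewrite -[RHS]trV; congr (\tr _).
  by rewrite !mulmxA -[V *m M *m V^T *m V]mulmxA hV mulmx1.
have DT : D^T = D by rewrite /D trmx_mul trmxK.
rewrite trDD // trV.
have Doff : forall k l : 'I_K, k != l -> D k l = 0.
  move=> k l kl; rewrite /D mxE big1 // => p _; rewrite mxE.
  case: (eqVneq (nat_of_ord p) (nat_of_ord k)) => [pk|/eqP pk].
    rewrite (Soff p l) ?mulr0 //; rewrite pk => /val_inj; exact/eqP.
  by rewrite (Soff p k) ?mul0r.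
have Ddiag : forall k : 'I_K, D k k = S (widen_ord hKN k) k ^+ 2.
  move=> k; rewrite /D mxE (bigD1 (widen_ord hKN k)) //= big1 ?addr0.
    by rewrite mxE expr2.
  move=> p pk; rewrite mxE (Soff p k) ?mul0r // => e; move/negP: pk; apply.
  by apply/eqP/val_inj.
congr (_ * _ - _ ^+ 2).
  rewrite /mxtrace; apply: eq_bigr => k _; rewrite mxE (bigD1 k) //= big1 ?addr0.
    by rewrite Ddiag -expr2 -exprM.
  by move=> l lk; rewrite (Doff k l) ?mul0r // eq_sym.
by rewrite /mxtrace; apply: eq_bigr => k _; rewrite Ddiag.
Qed.
End SVD.

Section Grad.
Variables (R : realType) (N K : nat).

Lemma dX2 (f : R -> R) x v df : is_derive x v f df ->
  is_derive x v (fun t => f t ^+ 2) (2%:R * (f x * df)).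
Proof.
move=> hf; have := dM hf hf.
have -> : (fun t => f t * f t) = (fun t => f t ^+ 2) by apply/funext => t; rewrite expr2.
move=> H; apply: is_derive_eq H _; by rewrite mulr2n mulrDl mul1r.
Qed.

Lemma dcM (c : R) (f : R -> R) x v df : is_derive x v f df ->
  is_derive x v (fun t => c * f t) (c * df).
Proof.
move=> hf; have := dM (dC x v c) hf.
move=> H; apply: is_derive_eq H _; by rewrite mulr0 addr0.
Qed.

Lemma dLf (y : 'I_N -> 'I_K -> R -> R) (dy : 'I_N -> 'I_K -> R) :
  (forall p q, is_derive (0:R) (1:R) (y p q) (dy p q)) ->
  let g := G (fun p q => y p q 0) in
  let dg a b := \sum_(p < N) (y p a 0 * dy p b + y p b 0 * dy p a) in
  is_derive (0:R) (1:R) (fun t => Lf (fun p q => y p q t))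
    (K%:R * (\sum_(a < K) \sum_(b < K) 2%:R * (g a b * dg a b))
     - 2%:R * ((\sum_(a < K) g a a) * \sum_(a < K) dg a a)).
Proof.
move=> hy g dg; rewrite /Lf /G.
apply: dB; last first.
  apply: dX2; apply: dS => a; apply: dS => p; exact: dM.
apply: dcM; apply: dS => a; apply: dS => b; apply: dX2; apply: dS => p; exact: dM.
Qed.


Lemma sum_pick n (F : 'I_n -> R) j : \sum_(b < n) F b * (b == j)%:R = F j.
Proof.
rewrite (bigD1 j) //= eqxx mulr1 big1 ?addr0 // => b bj.
by rewrite (negPf bj) mulr0.
Qed.

Lemma grad_eq (X : 'M[R]_(N, K)) : grad_zero (@l_om R N K) X -> forall i j,
  K%:R * (\sum_(b < K) G (fun p q => X p q) j b * X i b)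
  = (\sum_(a < K) G (fun p q => X p q) a a) * X i j.
Proof.
move=> gz i j; have H := gz i j.
have Fe : (fun t : R => l_om (X + t *: delta_mx i j)) =
   (fun t => Lf (fun p q => X p q + t * ((p == i) && (q == j))%:R)).
  apply/funext => t; rewrite lom_eq; congr Lf.
  by apply: funext => p; apply: funext => q; rewrite !mxE.
rewrite Fe in H.
have H2 := dLf _ _ (fun p q => dL 0 (X p q) (((p == i) && (q == j))%:R)).
have := etrans (esym (@derive_val _ _ _ _ _ _ _ H)) (@derive_val _ _ _ _ _ _ _ H2).
set Xf := (fun p q => X p q).
have gE : G (fun p q => X p q + 0 * ((p == i) && (q == j))%:R) = G Xf.
  by congr G; apply: funext => p; apply: funext => q; rewrite mul0r addr0.
rewrite /= gE.
have dgE : forall a b, \sum_(p < N) ((X p a + 0 * ((p == i) && (a == j))%:R) * ((p == i) && (b == j))%:R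
      + (X p b + 0 * ((p == i) && (b == j))%:R) * ((p == i) && (a == j))%:R)
     = X i a * (b == j)%:R + X i b * (a == j)%:R.
  move=> a b; rewrite (bigD1 i) //= !eqxx /= !mul0r !addr0 big1 ?addr0 // => p pi.
  by rewrite (negPf pi) /= !mulr0 addr0.
have E1 : \sum_(a < K) \sum_(b < K) 2%:R * (G Xf a b * (X i a * (b == j)%:R + X i b * (a == j)%:R))
    = 4%:R * \sum_(b < K) G Xf j b * X i b.
  transitivity (\sum_(a < K) 2%:R * (G Xf j a * X i a)
     + \sum_(a < K) (\sum_(b < K) 2%:R * (G Xf a b * X i b)) * (a == j)%:R).
    rewrite -big_split; apply: eq_bigr => a _ /=.
    rewrite G_sym -(sum_pick _ (fun b => 2%:R * (G Xf a b * X i a)) j) mulr_suml -big_split.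
    by apply: eq_bigr => b _ /=; ring.
  by rewrite sum_pick -big_split mulr_sumr; apply: eq_bigr => b _ /=; ring.
have E2 : \sum_(a < K) (X i a * (a == j)%:R + X i a * (a == j)%:R) = 2%:R * X i j.
  by rewrite big_split /= sum_pick; ring.
under eq_bigr do under eq_bigr do rewrite dgE.
rewrite E1 [X in _ - _ * (_ * X)](eq_bigr _ (fun a _ => dgE a a)) E2 => /eqP; rewrite eq_sym subr_eq0 => /eqP H3.
set S0 := \sum_(b < K) _ in H3 *.
set T0 := \sum_(a < K) _ in H3 *.
have E : (K%:R * S0 - T0 * X i j) * 4%:R = K%:R * (4%:R * S0) - 2%:R * (T0 * (2%:R * X i j)) by ring.
move: E; rewrite H3 subrr => /eqP; rewrite mulf_eq0 pnatr_eq0 orbF subr_eq0 => /eqP //.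
Qed.

Lemma grad_lom0 (f : 'I_N -> 'I_K -> R) :
  (forall i j, K%:R * (\sum_(b < K) G f j b * f i b) = (\sum_(a < K) G f a a) * f i j) ->
  Lf f = 0.
Proof.
move=> H; set T := \sum_(a < K) G f a a in H.
have E : \sum_(i < N) \sum_(j < K) f i j * (K%:R * (\sum_(b < K) G f j b * f i b))
       = \sum_(i < N) \sum_(j < K) f i j * (T * f i j).
  by apply: eq_bigr => i _; apply: eq_bigr => j _; rewrite H.
have E1 : \sum_(i < N) \sum_(j < K) f i j * (K%:R * (\sum_(b < K) G f j b * f i b))
       = K%:R * \sum_(a < K) \sum_(b < K) G f a b ^+ 2.
  transitivity (\sum_(i < N) \sum_(j < K) \sum_(b < K) K%:R * (G f j b * (f i j * f i b))).
    apply: eq_bigr => i _; apply: eq_bigr => j _; rewrite !mulr_sumr.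
    by apply: eq_bigr => b _; ring.
  rewrite exchange_big /= mulr_sumr; apply: eq_bigr => j _.
  rewrite exchange_big /= mulr_sumr; apply: eq_bigr => b _.
  by rewrite -mulr_sumr -mulr_sumr /G expr2.
have E2 : \sum_(i < N) \sum_(j < K) f i j * (T * f i j) = T ^+ 2.
  rewrite exchange_big /= expr2; transitivity (T * \sum_(a < K) G f a a); last by [].
  rewrite mulr_sumr; apply: eq_bigr => j _.
  rewrite /G mulr_sumr; apply: eq_bigr => i _; ring.
by rewrite /Lf -/T -E1 E E2 subrr.
Qed.
End Grad.
Arguments lom_eq {R N K}. Arguments Lf_ge0 {R N K}. Arguments Lf_eq0 {R N K}.
Arguments Lf_alpha {R N K}. Arguments grad_eq {R N K}. Arguments grad_lom0 {R N K}.

Theorem mainTheorem7 (R : realType) (N K : nat) (hKN : (K <= N)%N) :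
  (forall (X : 'M[R]_(N, K)) (U : 'M[R]_N) (S : 'M[R]_(N, K)) (V : 'M[R]_K),
     is_svd X U S V ->
     l_om X = K%:R * (\sum_(k < K) S (widen_ord hKN k) k ^+ 4)
              - (\sum_(k < K) S (widen_ord hKN k) k ^+ 2) ^+ 2)
  /\ (forall X : 'M[R]_(N, K), 0 <= l_om X)
  /\ (forall X : 'M[R]_(N, K),
        l_om X = 0 <-> exists alpha : R, 0 <= alpha /\ X^T *m X = alpha%:M)
  /\ (forall X : 'M[R]_(N, K),
        grad_zero (@l_om R N K) X ->
        exists alpha : R, 0 <= alpha /\ X^T *m X = alpha%:M).
Proof.
have P3 : forall X : 'M[R]_(N, K),
    l_om X = 0 <-> exists alpha : R, 0 <= alpha /\ X^T *m X = alpha%:M.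
  move=> X; rewrite lom_eq; split.
    move/Lf_eq0 => [alpha [ha hG]]; exists alpha; split => //.
    apply/matrixP => a b; rewrite !mxE -hG /G; apply: eq_bigr => p _; by rewrite mxE.
  case=> alpha [ha hX]; apply: (Lf_alpha _ alpha) => a b.
  have := congr1 (fun M : 'M[R]_K => M a b) hX; rewrite !mxE /G => <-.
  by apply: eq_bigr => p _; rewrite mxE.
split; first by move=> X U S V; exact: svd_lom.
split; first by move=> X; rewrite lom_eq; exact: Lf_ge0.
split; first exact: P3.
move=> X gz; apply/P3; rewrite lom_eq; apply: grad_lom0; exact: grad_eq.
Qed.
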